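(* Let $\mathcal{H}$ be a hereditary $\sigma$-ring of sets, let $\mu^*$ be an outer measure on $\mathcal{H}$, let $X$ be a set with $X\cap\bigcup\mathcal{H}\neq\emptyset$, and let $\overline{\overline{S}}$ be the class of all $\mu^{**}$-measurable sets. If $A\in\mathcal{H}$ and $\{L_n\}_{n\ge1}$ is a disjoint sequence of sets in $\overline{\overline{S}}$ with $\bigcup_{n=1}^\infty L_n=L$, then $$\sup_{T\in\overline{\overline{S}}}\sum_{n=1}^\infty\mu^*(A\cap L_n\cap T)=\sum_{n=1}^\infty\sup_{T\in\overline{\overline{S}}}\mu^*(A\cap L_n\cap T).$$
   Context: A nonempty class $\mathcal{E}$ of sets is hereditary if $F\in\mathcal{E}$ whenever $E\in\mathcal{E}$ and $F\subseteq E$. A set $E\in\mathcal{H}$ is $\mu^*$-measurable if $\mu^*(A)=\mu^*(A\cap E)+\mu^*(A\cap E')$ for every $A\in\mathcal{H}$, where $E'$ denotes the complement of $E$. Let $\overline{S}$ denote the class of all $\mu^*$-measurable sets. Let $K=\{B\subseteq X: B\cap E\in\mathcal{H}\text{ for all }E\in\mathcal{H}\}$. A set $Q\in K$ is called $\mu^{**}$-measurable if $Q\cap E$ is $\mu^*$-measurable for every $\mu^*$-measurable $E\in\mathcal{H}$, i.e. for all $A\in\mathcal{H}$ and all $E\in\overline{S}$, $\mu^*(A)=\mu^*[A\cap(Q\cap E)]+\mu^*[A\cap(Q\cap E)']$. *)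

(* Defs.v *)
From HB Require Import structures.
From mathcomp Require Import all_boot all_order all_algebra.
From mathcomp Require Import all_classical all_reals ereal sequences.
Set Implicit Arguments. Unset Strict Implicit. Unset Printing Implicit Defensive.
Import Order.TTheory GRing.Theory Num.Theory.
Local Open Scope classical_set_scope.
Local Open Scope ring_scope.
Local Open Scope ereal_scope.

Definition hereditary {U : Type} (H : set (set U)) : Prop :=
  H !=set0 /\ forall E F, H E -> F `<=` E -> H F.

Definition sigma_ring {U : Type} (H : set (set U)) : Prop :=
  H !=set0 /\
  (forall E F, H E -> H F -> H (E `\` F)) /\
  (forall F : nat -> set U, (forall n, H (F n)) -> H (\bigcup_n F n)).

Definition outer_measure_on {R : realType} {U : Type}
    (H : set (set U)) (mu : set U -> \bar R) : Prop :=
  mu set0 = 0 /\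
  (forall E, H E -> 0 <= mu E) /\
  (forall E F, H E -> H F -> E `<=` F -> mu E <= mu F) /\
  (forall F : nat -> set U, (forall n, H (F n)) ->
     mu (\bigcup_n F n) <= \sum_(0 <= n <oo) mu (F n)).

Definition mstar_measurable {R : realType} {U : Type}
    (H : set (set U)) (mu : set U -> \bar R) (E : set U) : Prop :=
  H E /\ forall A, H A -> mu A = mu (A `&` E) + mu (A `&` ~` E).

Definition classK {U : Type} (X : set U) (H : set (set U)) : set (set U) :=
  [set B | B `<=` X /\ forall E, H E -> H (B `&` E)].

Definition mstarstar_measurable {R : realType} {U : Type}
    (X : set U) (H : set (set U)) (mu : set U -> \bar R) (Q : set U) : Prop :=
  classK X H Q /\
  forall E, mstar_measurable H mu E ->
    forall A, H A -> mu A = mu (A `&` (Q `&` E)) + mu (A `&` ~` (Q `&` E)).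

(* Main.v *)
Require Import Defs.
From HB Require Import structures.
From mathcomp Require Import all_boot all_order all_algebra.
From mathcomp Require Import all_classical all_reals ereal sequences.
From mathcomp Require Import topology normedtype.
Import Order.TTheory GRing.Theory Num.Theory.
Local Open Scope classical_set_scope.
Local Open Scope ring_scope.
Local Open Scope ereal_scope.

Ltac seteq := apply/funext => ?; apply/propext; rewrite /setI /setU /setC /=; tauto.

Section S.
Variables (R : realType) (U : Type) (H : set (set U)) (mu : set U -> \bar R) (X : set U).
Hypotheses (hH : hereditary H) (sH : sigma_ring H).

Lemma H0 : H set0.
Proof. case: hH => -[E HE] h; exact: (h E). Qed.

Lemma HU E F : H E -> H F -> H (E `|` F).
Proof.
move=> HE HF; case: sH => _ [_ hc].
have -> : E `|` F = \bigcup_n (if n == 0%N then E else F).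
  apply/funext => x; apply/propext; split.
  - by case => ?; [exists 0%N | exists 1%N].
  - by case => -[|n] _ /=; [left|right].
by apply: hc => -[|n].
Qed.

Lemma HS E F : H E -> F `<=` E -> H F.
Proof. by case: hH => _ h; apply: h. Qed.

Lemma meas_union M1 M2 : mstar_measurable H mu M1 -> mstar_measurable H mu M2 ->
  mstar_measurable H mu (M1 `|` M2).
Proof.
move=> [H1 e1] [H2 e2]; split; first exact: HU.
move=> A0 HA0.
have HA1 : H (A0 `&` ~` M1) by apply: HS HA0 _ => x [].
have HA2 : H (A0 `&` (M1 `|` M2)) by apply: HS HA0 _ => x [].
rewrite (e1 _ HA0) (e2 _ HA1) (e1 _ HA2).
have -> : A0 `&` (M1 `|` M2) `&` M1 = A0 `&` M1 by seteq.
have -> : A0 `&` (M1 `|` M2) `&` ~` M1 = A0 `&` ~` M1 `&` M2 by seteq.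
have -> : A0 `&` ~` (M1 `|` M2) = A0 `&` ~` M1 `&` ~` M2 by seteq.
by rewrite addeA.
Qed.

Lemma mm_union Q1 Q2 : mstarstar_measurable X H mu Q1 ->
  mstarstar_measurable X H mu Q2 -> mstarstar_measurable X H mu (Q1 `|` Q2).
Proof.
move=> [[X1 K1] m1] [[X2 K2] m2]; split.
  split; first by move=> x [] ?; [apply: X1|apply: X2].
  by move=> E HE; rewrite setIUl; apply: HU; [apply: K1|apply: K2].
move=> E hE A0 HA0; rewrite setIUl.
have [HE _] := hE.
have hm := @meas_union (Q1 `&` E) (Q2 `&` E) (conj (K1 E HE) (m1 E hE)) (conj (K2 E HE) (m2 E hE)).
exact: hm.2.
Qed.

Lemma mm0 (omu : outer_measure_on H mu) : mstarstar_measurable X H mu set0.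
Proof.
split; first by split=> //; move=> E _; rewrite set0I; exact: H0.
move=> E _ A0 _; case: omu => m0 _.
by rewrite set0I setI0 setC0 setIT m0 add0e.
Qed.
End S.

Theorem lemma3p3 (R : realType) (U : Type) (H : set (set U))
  (mu : set U -> \bar R) (X : set U)
  (hH : hereditary H) (sH : sigma_ring H) (omu : outer_measure_on H mu)
  (hX : (X `&` \bigcup_(E in H) E) !=set0)
  (A : set U) (Ln : nat -> set U) (L : set U)
  (hA : H A)
  (hLn : forall n, mstarstar_measurable X H mu (Ln n))
  (hdisj : trivIset setT Ln)
  (hL : \bigcup_n Ln n = L) :
  ereal_sup [set \sum_(0 <= n <oo) mu (A `&` Ln n `&` T)
             | T in mstarstar_measurable X H mu]
  = \sum_(0 <= n <oo)
      ereal_sup [set mu (A `&` Ln n `&` T) | T in mstarstar_measurable X H mu].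
Proof.
have HSl := @HS U H hH.
have mm0l := @mm0 R U H mu X hH omu.
have mmU := @mm_union R U H mu X hH sH.
have [_ [mge0 [mmono _]]] := omu.
have HA B : H (A `&` B) by apply: (HSl _ _ hA) => x [].
have ge0 n T : 0 <= mu (A `&` Ln n `&` T) by apply: mge0; apply: (HSl _ _ hA) => x [[]].
have supE n : ereal_sup [set mu (A `&` Ln n `&` T) | T in mstarstar_measurable X H mu]
    = mu (A `&` Ln n).
  apply/le_anti/andP; split.
    apply: ge_ereal_sup => _ [T _ <-]; apply: mmono.
    - by apply: HSl _ _ (HA (Ln n)) _ => x [].
    - exact: HA.
    - by move=> x [].
  apply: (@le_trans _ _ (mu (A `&` Ln n `&` Ln n))); first by rewrite -setIA setIid.
  by apply: ereal_sup_ubound; exists (Ln n); first exact: hLn.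
rewrite (eq_eseriesr (fun n _ => supE n)).
apply/le_anti/andP; split.
  apply: ge_ereal_sup => _ [T _ <-]; apply: lee_nneseries => [i _ _|n _]; first exact: ge0.
  apply: mmono.
  - by apply: (HSl _ _ (HA (Ln n))) => x [].
  - exact: HA.
  - by move=> x [].
pose T N := fun x => exists2 k, (k < N)%N & Ln k x.
have TS N : mstarstar_measurable X H mu (T N).
  elim: N => [|N IH].
    have -> : T 0%N = set0 by apply/funext => x; apply/propext; split => // -[].
    exact: mm0l.
  have -> : T N.+1 = T N `|` Ln N.
    apply/funext => x; apply/propext; split.
      case=> k; rewrite ltnS leq_eqVlt => /orP[/eqP->|kN] Lx; [by right|by left; exists k].
    by case=> [[k kN Lx]|Lx]; [exists k => //; apply: ltnW|exists N].
  exact: mmU.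
apply: lime_le; first by apply: is_cvg_nneseries => n _ _; apply: mge0.
apply: nearW => N.
apply: le_trans (ereal_sup_ubound _); last by exists (T N).
apply: le_trans (nneseries_lim_ge N _); last by move=> n _ _; exact: ge0.
rewrite !big_mkord; apply: lee_sum => i _.
have -> : A `&` Ln i `&` T N = A `&` Ln i.
  apply/funext => x; apply/propext; split; first by case.
  by move=> [Ax Lx]; split => //; exists i.
by [].
Qed.
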